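(* Let $c,\ell,N\in\mathbb{N}_+$ and let the average pooling layer map $w^{i-1}=(w^{i-1}_1,\dots,w^{i-1}_{\ell N})$, $w^{i-1}_m\in\mathbb{R}^c$, to $w^i=(w^i_1,\dots,w^i_N)$ with $w^i_k=\frac{1}{\ell}\sum_{j=1}^{\ell}w^{i-1}_{\ell(k-1)+j}$. Let $\mu=1/\sqrt{\ell}$ and let $T\in\mathbb{S}^c$ be positive definite. Then for all inputs $w^{i-1}_a,w^{i-1}_b$ and every $k=1,\dots,N$, $$-(w^i_{a,k}-w^i_{b,k})^\top T(w^i_{a,k}-w^i_{b,k})+\mu^2\sum_{j=1}^{\ell}\big(w^{i-1}_{a,\ell(k-1)+j}-w^{i-1}_{b,\ell(k-1)+j}\big)^\top T\big(w^{i-1}_{a,\ell(k-1)+j}-w^{i-1}_{b,\ell(k-1)+j}\big)\ge 0.$$ Consequently, with $\underline{w}$ denoting the column-wise stacked vector, the layer satisfies $$\begin{bmatrix}\underline{w}_a^i-\underline{w}_b^i\\ \underline{w}_a^{i-1}-\underline{w}_b^{i-1}\end{bmatrix}^\top\begin{bmatrix}Q & 0\\ 0 & R\end{bmatrix}\begin{bmatrix}\underline{w}_a^i-\underline{w}_b^i\\ \underline{w}_a^{i-1}-\underline{w}_b^{i-1}\end{bmatrix}\ge0$$ for all inputs, with $Q=-\mathrm{blkdiag}(T,\dots,T)$ ($N$ blocks) and $R=\mu^2\mathrm{blkdiag}(T,\dots,T)$ ($\ell N$ blocks).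
   Context: $\mathbb{S}^c$ denotes the real symmetric $c\times c$ matrices. For a sequence $w=(w_1,\dots,w_M)$ of vectors in $\mathbb{R}^c$, the column-wise stacked vector is $\underline{w}=(w_1^\top,\dots,w_M^\top)^\top$. *)

(* Defs.v *)
From mathcomp Require Import all_boot all_order all_algebra.
Set Implicit Arguments. Unset Strict Implicit. Unset Printing Implicit Defensive.
Import Order.TTheory GRing.Theory Num.Theory.
Local Open Scope ring_scope.

Definition qform (R : ringType) (n : nat) (T : 'M[R]_n) (x : 'cV[R]_n) : R :=
  (x^T *m T *m x) 0 0.

Definition posdef (R : numDomainType) (n : nat) (T : 'M[R]_n) : Prop :=
  T^T = T /\ forall x : 'cV[R]_n, x != 0 -> 0 < qform T x.

Lemma pool_idx_proof (l N : nat) (k : 'I_N) (j : 'I_l) : (l * k + j < l * N)%N.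
Proof.
have hk := ltn_ord k; have hj := ltn_ord j.
apply: (@leq_trans (l * k.+1)); first by rewrite mulnS addnC ltn_add2r.
by rewrite leq_mul2l hk orbT.
Qed.

(* index l(k-1)+j (1-based) = l*k + j (0-based) *)
Definition pool_idx (l N : nat) (k : 'I_N) (j : 'I_l) : 'I_(l * N) :=
  Ordinal (pool_idx_proof k j).

Definition avgpool (R : fieldType) (c l N : nat) (w : 'I_(l * N) -> 'cV[R]_c)
  : 'I_N -> 'cV[R]_c :=
  fun k => (l%:R)^-1 *: \sum_(j < l) w (pool_idx k j).

(* decompose an index of 'I_(M*c) into (block, position) as in mxvec *)
Definition unpair (M c : nat) (p : 'I_(M * c)) : 'I_M * 'I_c :=
  enum_val (cast_ord (esym (mxvec_cast M c)) p).

(* column-wise stacked vector (w_1^T, ..., w_M^T)^T *)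
Definition stack (R : ringType) (M c : nat) (w : 'I_M -> 'cV[R]_c) : 'cV[R]_(M * c) :=
  (mxvec (\matrix_(m < M, j < c) w m j 0))^T.

Definition blkdiag (R : ringType) (M c : nat) (T : 'M[R]_c) : 'M[R]_(M * c) :=
  \matrix_(p, q) (if (unpair p).1 == (unpair q).1
                  then T (unpair p).2 (unpair q).2 else 0).

(* Main.v *)
Require Import Defs.
From mathcomp Require Import all_boot all_order all_algebra.
From mathcomp Require Import ring lra zify.
Set Implicit Arguments. Unset Strict Implicit. Unset Printing Implicit Defensive.
Import Order.TTheory GRing.Theory Num.Theory.
Local Open Scope ring_scope.

Section S.
Variable R : rcfType.

Definition bf (n : nat) (T : 'M[R]_n) (x y : 'cV[R]_n) : R := (x^T *m T *m y) 0 0.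

Lemma bfDl n (T : 'M[R]_n) x y z : bf T (x + y) z = bf T x z + bf T y z.
Proof. by rewrite /bf linearD /= !mulmxDl mxE. Qed.
Lemma bfDr n (T : 'M[R]_n) x y z : bf T z (x + y) = bf T z x + bf T z y.
Proof. by rewrite /bf !mulmxDr mxE. Qed.
Lemma bfNl n (T : 'M[R]_n) x z : bf T (- x) z = - bf T x z.
Proof. by rewrite /bf linearN /= !mulNmx mxE. Qed.
Lemma bfNr n (T : 'M[R]_n) x z : bf T z (- x) = - bf T z x.
Proof. by rewrite /bf !mulmxN mxE. Qed.
Lemma bfZl n (T : 'M[R]_n) a x z : bf T (a *: x) z = a * bf T x z.
Proof. by rewrite /bf linearZ /= -!scalemxAl mxE. Qed.
Lemma bf0l n (T : 'M[R]_n) z : bf T 0 z = 0.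
Proof. by rewrite /bf linear0 !mul0mx mxE. Qed.
Lemma bf_sym n (T : 'M[R]_n) x y : T^T = T -> bf T x y = bf T y x.
Proof.
move=> hT; rewrite /bf -[in LHS](trmxK (x^T *m T *m y)) [in LHS]mxE.
by rewrite !trmx_mul trmxK hT mulmxA.
Qed.
Lemma bf_sum n (T : 'M[R]_n) I (r : seq I) (P : pred I) (F : I -> 'cV_n) y :
  bf T (\sum_(i <- r | P i) F i) y = \sum_(i <- r | P i) bf T (F i) y.
Proof. exact: (big_morph (fun x => bf T x y) (fun a b => bfDl T a b y) (bf0l T y)). Qed.

Lemma bf_ge0 n (T : 'M[R]_n) x : posdef T -> 0 <= bf T x x.
Proof.
case=> _ hp; have [->|nz] := eqVneq x 0; first by rewrite bf0l.
exact/ltW/hp.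
Qed.

Lemma part1 n (T : 'M[R]_n) (l : nat) (hl : (0 < l)%N) (d : 'I_l -> 'cV[R]_n) :
  posdef T ->
  0 <= - qform T ((l%:R)^-1 *: \sum_j d j) + (l%:R)^-1 * \sum_j qform T (d j).
Proof.
move=> hT; set m := _ *: _.
have lnz : (l%:R : R) != 0 by rewrite pnatr_eq0 -lt0n.
have hS : \sum_j d j = l%:R *: m by rewrite /m scalerA divff // scale1r.
have key : \sum_(j < l) bf T (d j - m) (d j - m)
   = \sum_j qform T (d j) - l%:R * qform T m.
  have e : forall j, bf T (d j - m) (d j - m)
     = qform T (d j) - 2%:R * bf T (d j) m + qform T m.
    move=> j; rewrite bfDl !bfDr !bfNl !bfNr opprK (bf_sym _ m) ?hT.1 //.
    rewrite /qform -/(bf T _ _) -/(bf T m m); ring.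
  rewrite (eq_bigr _ (fun j _ => e j)) !big_split /=.
  rewrite sumrN -mulr_sumr -bf_sum hS.
  rewrite bfZl sumr_const card_ord /qform -/(bf T m m).
  rewrite -mulr_natl ; ring.
have : 0 <= \sum_(j < l) bf T (d j - m) (d j - m) by apply: sumr_ge0 => j _; apply: bf_ge0.
rewrite key => h.
have -> : - qform T m + (l%:R)^-1 * \sum_j qform T (d j)
   = (l%:R)^-1 * (\sum_j qform T (d j) - l%:R * qform T m).
  by rewrite mulrBr mulrA mulVf // mul1r addrC.
by apply: mulr_ge0 => //; rewrite invr_ge0 ler0n.
Qed.

Lemma qform_block m n (A : 'M[R]_m) (D : 'M[R]_n) x y :
  qform (block_mx A 0 0 D) (col_mx x y) = qform A x + qform D y.
Proof.
rewrite /qform tr_col_mx mul_row_block !mulmx0 addr0 add0r mul_row_col mxE.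
by [].
Qed.

Lemma qformN n (A : 'M[R]_n) x : qform (- A) x = - qform A x.
Proof. by rewrite /qform mulmxN mulNmx mxE. Qed.
Lemma qformZ n (A : 'M[R]_n) a x : qform (a *: A) x = a * qform A x.
Proof. by rewrite /qform -scalemxAr -scalemxAl mxE. Qed.

Lemma stackE M c (w : 'I_M -> 'cV[R]_c) p i :
  stack w p i = w (unpair p).1 (unpair p).2 0.
Proof. by rewrite /stack mxE castmxE !mxE /unpair. Qed.

Lemma stackB M c (w v : 'I_M -> 'cV[R]_c) :
  stack w - stack v = stack (fun m => w m - v m).
Proof. by apply/matrixP => p i; rewrite /stack !(mxE, castmxE). Qed.

Lemma unpair_idx M c (i : 'I_M) (j : 'I_c) : unpair (mxvec_index i j) = (i, j).
Proof. by rewrite /unpair /mxvec_index cast_ordK enum_rankK. Qed.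

Lemma sum_unpair M c (F : 'I_M * 'I_c -> R) :
  \sum_(p < M * c) F (unpair p) = \sum_(x : 'I_M * 'I_c) F x.
Proof.
rewrite (reindex (fun x : 'I_M * 'I_c => mxvec_index x.1 x.2)) /=.
  by apply: eq_bigr => -[i j] _; rewrite unpair_idx.
exists (@unpair M c) => [[i j] _ | k _] /=; first by rewrite unpair_idx.
by case/mxvec_indexP: k => i j; rewrite unpair_idx.
Qed.

Lemma qform_sum n (A : 'M[R]_n) x :
  qform A x = \sum_j \sum_i x i 0 * A i j * x j 0.
Proof.
rewrite /qform mxE; apply: eq_bigr => j _; rewrite mxE mulr_suml.
by apply: eq_bigr => i _; rewrite !mxE.
Qed.

Lemma qform_blk M c (T : 'M[R]_c) (w : 'I_M -> 'cV[R]_c) :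
  qform (blkdiag M T) (stack w) = \sum_m qform T (w m).
Proof.
rewrite qform_sum.
under eq_bigr => q _ do (under eq_bigr => p _ do rewrite !stackE mxE).
rewrite (sum_unpair (fun y => \sum_(i < M * c)
   w (unpair i).1 (unpair i).2 0 *
   (if (unpair i).1 == y.1 then T (unpair i).2 y.2 else 0) * w y.1 y.2 0)).
rewrite -(pair_bigA _ (fun m j => \sum_(i < M * c)
   w (unpair i).1 (unpair i).2 0 *
   (if (unpair i).1 == m then T (unpair i).2 j else 0) * w m j 0)) /=.
apply: eq_bigr => m _; rewrite qform_sum; apply: eq_bigr => j _.
rewrite (sum_unpair (fun y => w y.1 y.2 0 *
   (if y.1 == m then T y.2 j else 0) * w m j 0)).
rewrite -(pair_bigA _ (fun m' i => w m' i 0 *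
   (if m' == m then T i j else 0) * w m j 0)) /= (bigD1 m) //= [X in _ + X]big1 ?addr0.
  by apply: eq_bigr => i _; rewrite eqxx.
by move=> m' /negbTE hm; apply: big1 => i _; rewrite hm mulr0 mul0r.
Qed.

Lemma sum_pool (l N : nat) (hl : (0 < l)%N) (F : 'I_(l * N) -> R) :
  \sum_(p < l * N) F p = \sum_(k < N) \sum_(j < l) F (pool_idx k j).
Proof.
rewrite pair_bigA /=.
rewrite (reindex (fun x : 'I_N * 'I_l => pool_idx x.1 x.2)) //=.
have h1 (p : 'I_(l * N)) : (p %/ l < N)%N by rewrite ltn_divLR // [(N * l)%N]mulnC.
have h2 (p : 'I_(l * N)) : (p %% l < l)%N by rewrite ltn_pmod.
exists (fun p => (Ordinal (h1 p), Ordinal (h2 p))) => [[k j] _ | p _] /=.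
  congr pair; apply: val_inj => /=.
    by rewrite mulnC divnMDl // divn_small // addn0.
  by rewrite mulnC modnMDl modn_small.
by apply: val_inj => /=; rewrite mulnC -divn_eq.
Qed.
End S.

Unset Implicit Arguments.
Theorem lemma8 (R : rcfType) (c l N : nat) (hc : (0 < c)%N) (hl : (0 < l)%N)
  (hN : (0 < N)%N) (T : 'M[R]_c) (hT : posdef T)
  (wa wb : 'I_(l * N) -> 'cV[R]_c) :
  let mu := (Num.sqrt (l%:R : R))^-1 in
  (forall k : 'I_N,
     0 <= - qform T (avgpool wa k - avgpool wb k)
          + mu ^+ 2 * \sum_(j < l) qform T (wa (pool_idx k j) - wb (pool_idx k j)))
  /\
  0 <= qform (block_mx (- blkdiag N T) 0 0 (mu ^+ 2 *: blkdiag (l * N) T))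
             (col_mx (stack (avgpool wa) - stack (avgpool wb)) (stack wa - stack wb)).
Proof.
move=> mu.
have hmu : mu ^+ 2 = (l%:R)^-1 by rewrite /mu exprVn sqr_sqrtr // ler0n.
have P1 : forall k : 'I_N,
     0 <= - qform T (avgpool wa k - avgpool wb k)
          + mu ^+ 2 * \sum_(j < l) qform T (wa (pool_idx k j) - wb (pool_idx k j)).
  move=> k; rewrite hmu /avgpool -scalerBr -sumrB.
  exact: part1.
split => //.
rewrite qform_block qformN qformZ !stackB !qform_blk sum_pool // mulr_sumr -sumrN -big_split /=.
by apply: sumr_ge0 => k _; apply: P1.
Qed.
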